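(* Let $\ln_G:(0,\infty)\to\mathbb{R}$ be a continuous, strictly increasing, strictly concave function with $\ln_G(1)=0$. Put $G(t):=\ln_G(e^t)$ and $\chi(u,v):=G\big(G^{-1}(u)+G^{-1}(v)\big)$ (for $u,v$ in the range of $G$), so that $\ln_G(xy)=\chi(\ln_G x,\ln_G y)$ for all $x,y>0$. Fix $\alpha>0$, $\alpha\neq 1$, and for a probability distribution $(p_1,\dots,p_W)$ define $$Z_{G,\alpha}(p_1,\dots,p_W):=\frac{\ln_G\big(\sum_{i=1}^W p_i^{\alpha}\big)}{1-\alpha}.$$ Let $A$, $B$ be statistically independent systems with arbitrary probability distributions $\{p_i^A\}_{i=1}^{W_A}$, $\{p_j^B\}_{j=1}^{W_B}$, and let $A\cup B$ be the composed system with joint distribution $p^{A\cup B}_{ij}=p_i^Ap_j^B$. Then $$Z_{G,\alpha}(A\cup B)=\Phi\big(Z_{G,\alpha}(A),Z_{G,\alpha}(B)\big),\qquad \Phi(x,y):=\frac{1}{1-\alpha}\,\chi\big((1-\alpha)x,(1-\alpha)y\big),$$ and $\Phi$ satisfies (wherever defined) $\Phi(x,y)=\Phi(y,x)$, $\Phi(x,0)=x$, and $\Phi(\Phi(x,y),z)=\Phi(x,\Phi(y,z))$.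
   Context: $Z_{G,\alpha}(X)$ denotes the entropy evaluated on the probability distribution of system $X$. *)

(* Defs.v *)
From HB Require Import structures.
From mathcomp Require Import all_boot all_order all_algebra.
From mathcomp Require Import all_classical all_reals all_analysis.
Set Implicit Arguments. Unset Strict Implicit. Unset Printing Implicit Defensive.
Import Order.TTheory GRing.Theory Num.Theory.
Import numFieldNormedType.Exports.
Local Open Scope ring_scope.
Local Open Scope classical_set_scope.

Section GEntropy.
Variable R : realType.

(* Hypotheses on ln_G : (0,oo) -> R (values of lnG outside (0,oo) are irrelevant). *)
Definition lnG_admissible (lnG : R -> R) : Prop :=
  (forall x : R, 0 < x -> {for x, continuous lnG}) /\
  (forall x y : R, 0 < x -> x < y -> lnG x < lnG y) /\
  (forall x y t : R, 0 < x -> 0 < y -> x != y -> 0 < t < 1 ->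
      t * lnG x + (1 - t) * lnG y < lnG (t * x + (1 - t) * y)) /\
  lnG 1 = 0.

Definition Gfun (lnG : R -> R) (t : R) : R := lnG (expR t).

Definition in_rangeG (lnG : R -> R) (u : R) : Prop := exists t : R, Gfun lnG t = u.

(* G^{-1}(u): some t with G t = u (unique, since G is strictly increasing),
   arbitrary (0) when u is outside the range of G. *)
Definition Ginv (lnG : R -> R) (u : R) : R := xget 0 [set t | Gfun lnG t = u].

Definition chi (lnG : R -> R) (u v : R) : R := Gfun lnG (Ginv lnG u + Ginv lnG v).

Definition Phi (lnG : R -> R) (alpha x y : R) : R :=
  (1 - alpha)^-1 * chi lnG ((1 - alpha) * x) ((1 - alpha) * y).

Definition is_distr (T : finType) (p : T -> R) : Prop :=
  (forall i, 0 <= p i) /\ \sum_(i : T) p i = 1.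

(* Z_{G,alpha}(p) := ln_G(sum_i p_i^alpha) / (1 - alpha), with 0^alpha = 0 (powR) *)
Definition ZGa (lnG : R -> R) (alpha : R) (T : finType) (p : T -> R) : R :=
  lnG (\sum_(i : T) p i `^ alpha) / (1 - alpha).

End GEntropy.

(* Main.v *)
Require Import Defs.
From HB Require Import structures.
From mathcomp Require Import all_boot all_order all_algebra.
From mathcomp Require Import all_classical all_reals all_analysis.
Import Order.TTheory GRing.Theory Num.Theory.
Local Open Scope ring_scope.

Section H.
Variable R : realType.
Variable lnG : R -> R.
Hypothesis mono : forall x y : R, 0 < x -> x < y -> lnG x < lnG y.


Lemma G_inj s t : Gfun lnG s = Gfun lnG t -> s = t.
Proof.
rewrite /Gfun => E; case: (ltgtP s t) => // H.
- have : expR s < expR t by rewrite ltr_expR.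
  move=> /(mono _ _ (expR_gt0 s)); by rewrite E ltxx.
- have : expR t < expR s by rewrite ltr_expR.
  move=> /(mono _ _ (expR_gt0 t)); by rewrite E ltxx.
Qed.

Lemma Ginv_G t : Ginv lnG (Gfun lnG t) = t.
Proof.
apply: G_inj; rewrite /Ginv.
by have := @xgetPex _ 0 [set s | Gfun lnG s = Gfun lnG t] (ex_intro _ t erefl).
Qed.

Lemma G_Ginv u : in_rangeG lnG u -> Gfun lnG (Ginv lnG u) = u.
Proof. by case=> t <-; rewrite Ginv_G. Qed.

Lemma chi_range u v : in_rangeG lnG (chi lnG u v).
Proof. by rewrite /chi; eexists. Qed.
End H.

Lemma sum_pos (R : realType) (T : finType) (p : T -> R) (a : R) :
  is_distr p -> 0 < \sum_i p i `^ a.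
Proof.
case=> p0 p1; rewrite lt_neqAle sumr_ge0 ?andbT; last by move=> *; exact: powR_ge0.
apply/eqP=> /esym E.
have Z : forall i, p i = 0.
  move=> i; apply: (@powR_eq0_eq0 _ _ a).
  by apply: (psumr_eq0P _ E) => // j _; exact: powR_ge0.
move: p1; rewrite big1 => [/eqP|i _]; last exact: Z.
by rewrite eq_sym oner_eq0.
Qed.

Theorem mainTheorem4 (R : realType) (lnG : R -> R) (alpha : R) :
  lnG_admissible lnG -> 0 < alpha -> alpha != 1 ->
  (* composition law for independent systems A, B *)
  (forall (WA WB : nat) (pA : 'I_WA -> R) (pB : 'I_WB -> R),
      is_distr pA -> is_distr pB ->
      ZGa lnG alpha (fun ij : 'I_WA * 'I_WB => pA ij.1 * pB ij.2)
      = Phi lnG alpha (ZGa lnG alpha pA) (ZGa lnG alpha pB)) /\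
  (* properties of Phi, wherever defined *)
  (forall x y : R,
      in_rangeG lnG ((1 - alpha) * x) -> in_rangeG lnG ((1 - alpha) * y) ->
      Phi lnG alpha x y = Phi lnG alpha y x) /\
  (forall x : R, in_rangeG lnG ((1 - alpha) * x) -> Phi lnG alpha x 0 = x) /\
  (forall x y z : R,
      in_rangeG lnG ((1 - alpha) * x) -> in_rangeG lnG ((1 - alpha) * y) ->
      in_rangeG lnG ((1 - alpha) * z) ->
      Phi lnG alpha (Phi lnG alpha x y) z = Phi lnG alpha x (Phi lnG alpha y z)).
Proof.
case=> _ [mono [_ l1]] a0 a1.
have a1' : 1 - alpha != 0 by rewrite subr_eq0 eq_sym.
have PhiK : forall x, (1 - alpha) * ((1 - alpha)^-1 * x) = x.
  by move=> x; rewrite mulrA mulfV // mul1r.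
split; [|split; [|split]].
- move=> WA WB pA pB dA dB.
  have hA := @sum_pos _ _ _ alpha dA; have hB := @sum_pos _ _ _ alpha dB.
  case: dA => pA0 _; case: dB => pB0 _.
  rewrite /ZGa /Phi /chi !(mulrC (1 - alpha) (_ / _)) !divfK // [RHS]mulrC.
  idtac.
  have -> : lnG (\sum_i pA i `^ alpha) = Gfun lnG (ln (\sum_i pA i `^ alpha)).
    by rewrite /Gfun lnK.
  have -> : lnG (\sum_i pB i `^ alpha) = Gfun lnG (ln (\sum_i pB i `^ alpha)).
    by rewrite /Gfun lnK.
  rewrite !(@Ginv_G _ _ mono) /Gfun expRD !lnK //; congr (lnG _ * _).
  rewrite big_distrl /=.
  under [RHS]eq_bigr => i _ do rewrite mulr_sumr.
  rewrite pair_bigA /=; apply: eq_bigr => -[i j] _ /=.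
  by rewrite powRM.
- by move=> x y _ _; rewrite /Phi /chi [Ginv _ _ + _]addrC.
- move=> x hx; rewrite /Phi /chi mulr0.
  have -> : Ginv lnG 0 = 0.
      by have := @Ginv_G _ _ mono 0; rewrite /Gfun expR0 l1.
  by rewrite addr0 (@G_Ginv _ _ mono _ hx) mulrA mulVf // mul1r.
- move=> x y z hx hy hz; rewrite /Phi !PhiK; congr (_ * _).
  by rewrite /chi (@Ginv_G _ _ mono (_ + _)) (@Ginv_G _ _ mono (_ + _)) addrA.
Qed.
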